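(* Let $m,n$ be positive integers, let $(W_1,\dots,W_n)$ have the multinomial distribution with parameters $m$ and $(\frac1n,\dots,\frac1n)$, let $\gamma>0$ and put $k_m=\lfloor\gamma\log m\rfloor$. Then there exists a constant $c_\gamma>0$ such that $$\max_{k\le k_m}\ \max_{\substack{s_1,\dots,s_n\in\mathbb{N}_0\\ \sum_{j=1}^ns_j=k}}\Big(\frac nm\Big)^{\sum_{j=1}^n\mathbb{1}\{s_j\ge1\}}\mathbb{E}\big[W_1^{s_1}\cdots W_n^{s_n}\big]\le\Big(1+c_\gamma\frac{m^{1+\gamma}}{n}\Big)^{k_m}.$$ *)

(* Defs.v *)
From HB Require Import structures.
From mathcomp Require Import all_boot all_order all_algebra.
From mathcomp Require Import all_classical all_reals all_analysis.
Set Implicit Arguments. Unset Strict Implicit. Unset Printing Implicit Defensive.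
Import Order.TTheory GRing.Theory Num.Theory.
Local Open Scope ring_scope.

(* Multinomial(m; 1/n,...,1/n) probability mass at the occupancy vector w
   (w j = number of the m trials landing in cell j):
   m! / (w_1! ... w_n!) * (1/n)^m, when sum_j w_j = m. *)
Definition multinom_pmf (R : realType) (m n : nat) (w : {ffun 'I_n -> 'I_m.+1}) : R :=
  if (\sum_j (w j : nat) == m)%N
  then (m`!)%:R / (\prod_j ((w j : nat)`!))%:R * (n%:R^-1) ^+ m
  else 0.

(* E[W_1^{s_1} ... W_n^{s_n}] for (W_1,...,W_n) ~ Multinomial(m; 1/n,...,1/n);
   the support {w : sum w = m} is contained in {0..m}^n. *)
Definition multinom_moment (R : realType) (m n : nat) (s : 'I_n -> nat) : R :=
  \sum_(w : {ffun 'I_n -> 'I_m.+1})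
     @multinom_pmf R m n w * \prod_j ((w j : nat)%:R ^+ s j).

(* k_m = floor (gamma * log m), as a natural number (m >= 1 so it is >= 0). *)
Definition kmax (R : realType) (gamma : R) (m : nat) : nat :=
  `|Num.floor (gamma * ln (m%:R : R))|%N.

(* Main.v *)
Require Import Defs.
From HB Require Import structures.
From mathcomp Require Import all_boot all_order all_algebra.
From mathcomp Require Import all_classical all_reals all_analysis.
From mathcomp Require Import ring lra.
Import Order.TTheory GRing.Theory Num.Theory.
Local Open Scope ring_scope.

Section Comb.
Variables (R : realType) (n M : nat).
Hypothesis n_gt0 : (0 < n)%N.
Local Notation T := {ffun 'I_n -> 'I_M.+1}.

Definition wsum (w : T) : nat := (\sum_j (w j : nat))%N.
Definition coef (m : nat) (w : T) : R :=
  (m`!)%:R / (\prod_j ((w j : nat)`!))%:R * (n%:R^-1) ^+ m.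
Definition Q m (F : ('I_n -> nat) -> R) : R :=
  \sum_(w : T | wsum w == m) coef m w * F (fun j => (w j : nat)).

Lemma wsum_ge (w : T) j : (w j <= wsum w)%N.
Proof. by rewrite /wsum (bigD1 j) //= leq_addr. Qed.

Definition up j (w : T) : T := [ffun i => inord (w i + (i == j))%N].
Definition down j (w : T) : T := [ffun i => inord (w i - (i == j))%N].

Lemma up_val j (w : T) i : (w j < M)%N -> (up j w i : nat) = (w i + (i == j))%N.
Proof.
move=> hj; have h : ((w i + (i == j))%N < M.+1)%N.
  case: (eqVneq i j) => [->|_] /=; first by rewrite addn1 ltnS.
  by rewrite addn0 ltn_ord.
by rewrite ffunE inordK.
Qed.

Lemma up_down j (w : T) : (0 < w j)%N -> up j (down j w) = w.
Proof.
move=> hj; apply/ffunP => i; apply: ord_inj.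
have h1 : ((w i - (i == j))%N < M.+1)%N by apply: leq_ltn_trans (leq_subr _ _) (ltn_ord _).
have e : (w i - (i == j) + (i == j))%N = w i.
  by case: (eqVneq i j) => [->|_] /=; [rewrite subnK | rewrite subn0 addn0].
rewrite !ffunE (inordK h1) e inordK //.
Qed.

Lemma down_up j (w : T) : (w j < M)%N -> down j (up j w) = w.
Proof.
move=> hj; apply/ffunP => i; apply: ord_inj.
rewrite ffunE up_val // addnK inordK //.
Qed.

Lemma wsum_up j (w : T) : (w j < M)%N -> wsum (up j w) = (wsum w).+1.
Proof.
move=> hj; rewrite /wsum.
rewrite (eq_bigr (fun i => (w i + (i == j))%N)); last by move=> i _; rewrite up_val.
rewrite big_split /= [X in (_ + X)%N](_ : _ = 1%N) ?addn1 //.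
by rewrite (bigD1 j) //= eqxx big1 // => i /negbTE ->.
Qed.

Lemma up_j_sat j (w : T) : ~~ (w j < M)%N -> (up j w j : nat) = 0%N.
Proof.
move=> hj; rewrite ffunE eqxx /inord /insubd insubF //.
have : (w j <= M)%N by rewrite -ltnS.
by move: hj; rewrite -leqNgt addn1 ltnS => a b; apply/negbTE; rewrite -leqNgt; have -> : w j = M :> nat by apply/eqP; rewrite eqn_leq b a.
Qed.


Lemma Q_shift m j F : (m <= M)%N ->
  Q m (fun w => (w j)%:R * F w) =
  (m%:R / n%:R) * Q m.-1 (fun w => F (fun i => (w i + (i == j))%N)).
Proof.
case: m => [|m] hm.
  rewrite mul0r mul0r /Q big1 // => w /eqP hw.
  have := wsum_ge w j; rewrite hw leqn0 => /eqP ->.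
  by rewrite mul0r mulr0.
rewrite /Q (bigID (fun w : T => 0 < w j)%N) /= [X in _ + X]big1 ?addr0; last first.
  by move=> w /andP[_]; rewrite -eqn0Ngt => /eqP ->; rewrite mul0r mulr0.
rewrite (reindex_onto (up j) (down j)); last by move=> w /andP[_ h]; exact: up_down.
rewrite big_distrr /=.
apply: eq_big => w.
  case: (ltnP (w j) M) => hj.
    by rewrite wsum_up // down_up // eqxx andbT up_val // eqxx addn1 ltn0Sn andbT eqSS.
  rewrite up_j_sat ?ltnn ?andbF; last by rewrite -leqNgt.
  symmetry; apply/negbTE; rewrite neq_ltn; apply/orP; right.
  exact: leq_trans hm (leq_trans hj (wsum_ge w j)).
move=> /andP[/andP[_ hpos] _].
have hj : (w j < M)%N.
  by apply/negPn/negP => /up_j_sat h; rewrite h in hpos.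
have upv := fun i => @up_val j w i hj.
have -> : (fun i => (up j w i : nat)) = (fun i => (w i + (i == j))%N).
  by apply: funext => i; rewrite upv.
have hp : (\prod_i (up j w i : nat)`!)%N = ((w j).+1 * \prod_i (w i : nat)`!)%N.
  rewrite (bigD1 j) //= [in RHS](bigD1 j) //= upv eqxx addn1 factS mulnA; congr (_ * _)%N.
  by apply: eq_bigr => i /negbTE hi; rewrite upv hi addn0.
have P0 : ((\prod_i (w i : nat)`!)%N%:R : R) != 0.
  by rewrite pnatr_eq0 -lt0n prodn_gt0 // => i; exact: fact_gt0.
have n0 : (n%:R : R) != 0 by rewrite pnatr_eq0 -lt0n.
have w0 : ((w j).+1%:R : R) != 0 by rewrite pnatr_eq0.
rewrite /coef hp /= upv eqxx addn1 factS !natrM exprS /=.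
field.
by rewrite P0 n0 /= addrC natr1 w0.
Qed.

Lemma Q_add m F G : Q m (fun w => F w + G w) = Q m F + Q m G.
Proof. by rewrite /Q -big_split; apply: eq_bigr => w _; rewrite mulrDr. Qed.

Lemma Q_scale m c F : Q m (fun w => c * F w) = c * Q m F.
Proof. by rewrite /Q big_distrr; apply: eq_bigr => w _ /=; rewrite mulrCA. Qed.

Lemma Q_mass m : (m <= M)%N -> Q m (fun _ => 1) = 1.
Proof.
have n0 : (n%:R : R) != 0 by rewrite pnatr_eq0 -lt0n.
elim: m => [|m IH] hm.
  rewrite /Q (big_pred1 [ffun _ => ord0]).
    rewrite /coef big1 => [|i _]; last by rewrite ffunE.
    by rewrite fact0 expr0 !mulr1 divr1.
  move=> w /=; rewrite /wsum sum_nat_eq0; apply/forallP/eqP => [h|->].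
    by apply/ffunP => i; rewrite ffunE; apply: ord_inj; exact: (eqP (h i)).
  by move=> i; rewrite ffunE.
have e : Q m.+1 (fun _ => 1) = (m.+1%:R)^-1 * \sum_j Q m.+1 (fun w => (w j)%:R * 1).
  rewrite /Q exchange_big /= big_distrr /=; apply: eq_bigr => w /eqP hw.
  under eq_bigr => j _ do rewrite mulr1.
  rewrite -mulr_sumr -natr_sum -/(wsum w) hw mulr1.
  have m0 : (m.+1%:R : R) != 0 by rewrite pnatr_eq0.
  by field.
rewrite e (eq_bigr (fun _ => (m.+1%:R / n%:R))); last first.
  by move=> j _; rewrite (Q_shift m.+1 j (fun _ => 1)) //= IH ?mulr1 // ltnW.
rewrite sumr_const card_ord.
have m0 : (m.+1%:R : R) != 0 by rewrite pnatr_eq0.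
rewrite -mulr_natr; field.
by rewrite n0 addrC natr1 m0.
Qed.

End Comb.

Section Main.
Variables (R : realType) (n M : nat) (g : R) (K : nat).
Hypothesis n_gt0 : (0 < n)%N.
Hypothesis g0 : 0 <= g.
Hypothesis gK : (2 : R) ^+ K <= g.

Let lam : R := M%:R / n%:R.
Lemma lam_ge0 : 0 <= lam. Proof. by rewrite /lam divr_ge0. Qed.

Definition hh (a t : nat) : R :=
  if a == 0%N then (if t == 0%N then 1 else lam * (1 + lam * g) ^+ t.-1)
  else (a%:R + lam * g) ^+ t.

Definition PP (a s : 'I_n -> nat) (w : 'I_n -> nat) : R :=
  \prod_i ((w i + a i)%N%:R) ^+ (s i).

Lemma hh_ge0 a t : 0 <= hh a t.
Proof.
have := lam_ge0 => l0.
rewrite /hh; case: (a == 0%N); last by rewrite exprn_ge0 // addr_ge0 // mulr_ge0.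
case: (t == 0%N); first exact: ler01.
by rewrite mulr_ge0 // exprn_ge0 // addr_ge0 // mulr_ge0.
Qed.

Lemma hh_step a t : (2 : R) ^+ t <= g -> lam * hh a.+1 t + a%:R * hh a t <= hh a t.+1.
Proof.
move=> h2; have l0 := lam_ge0.
case: a => [|a]; rewrite /hh /=.
  by rewrite mul0r addr0.
set x := (a.+1%:R + lam * g).
have x1 : 1 <= x.
  have : 0 <= lam * g by rewrite mulr_ge0.
  have : 1 <= (a.+1%:R : R) by rewrite ler1n.
  rewrite /x; lra.
have x0 : 0 <= x by apply: le_trans x1.
have e : (a.+2%:R + lam * g) = x + 1 by rewrite /x -natr1 addrAC.
rewrite e exprS.
have : (x + 1) ^+ t <= g * x ^+ t.
  apply: le_trans (_ : (2 * x) ^+ t <= _).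
    by apply: lerXn2r; rewrite ?nnegrE; lra.
  by rewrite exprMn ler_wpM2r // exprn_ge0.
move=> hx.
have : lam * (x + 1) ^+ t <= lam * (g * x ^+ t) by rewrite ler_wpM2l.
rewrite /x; nra.
Qed.

Lemma main k : forall (s a : 'I_n -> nat) m, (m <= M)%N ->
  (\sum_i s i)%N = k -> (k <= K)%N ->
  Q R n M m (PP a s) <= \prod_i hh (a i) (s i).
Proof.
elim: k => [|k IH] s a m hm hs hk.
  have s0 : forall i, s i = 0%N.
    move=> i; apply/eqP; move: hs => /eqP; rewrite sum_nat_eq0 => /forallP /(_ i) //.
  have -> : PP a s = (fun _ => 1).
    by apply: funext => w; rewrite /PP big1 // => i _; rewrite s0 expr0.
  rewrite (Q_mass _ _ _ n_gt0) // big1 // => i _; rewrite s0 /hh; by case: (a i == 0%N).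
have [j hj] : exists j, (0 < s j)%N.
  case: (pickP (fun j => 0 < s j)%N) => [j hj|h0]; first by exists j.
  suff : (\sum_i s i)%N = 0%N by rewrite hs.
  by apply: big1 => i _; apply/eqP; rewrite eqn0Ngt h0.
set t := (s j).-1.
have sjE : s j = t.+1 by rewrite /t prednK.
pose s' := fun i => (s i - (i == j))%N.
pose a' := fun i => (a i + (i == j))%N.
have s'j : s' j = t by rewrite /s' eqxx sjE subn1.
have s'i : forall i, i != j -> s' i = s i by move=> i /negbTE hi; rewrite /s' hi subn0.
have hs' : (\sum_i s' i)%N = k.
  rewrite (bigD1 j) //= s'j; move: hs; rewrite (bigD1 j) //= sjE addSn => [[<-]].
  by congr (_ + _)%N; apply: eq_bigr => i hi; exact: s'i.
have ePP : PP a s = (fun w => (w j)%:R * PP a s' w + (a j)%:R * PP a s' w).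
  apply: funext => w; rewrite -mulrDl -natrD /PP (bigD1 j) //= [in RHS](bigD1 j) //=.
  rewrite sjE s'j exprS mulrA; congr (_ * _); apply: eq_bigr => i hi; by rewrite s'i.
have eshift : (fun w => PP a s' (fun i => (w i + (i == j))%N)) = PP a' s'.
  by apply: funext => w; rewrite /PP; apply: eq_bigr => i _; rewrite /a' addnAC addnA.
have ek : (k <= K)%N by apply: ltnW.
have IH1 := IH s' a' m.-1 (leq_trans (leq_pred m) hm) hs' ek.
have IH2 := IH s' a m hm hs' ek.
rewrite ePP Q_add Q_scale (Q_shift _ _ _ n_gt0) // eshift.
set C := \prod_(i | i != j) hh (a i) (s i).
have C0 : 0 <= C by apply: prodr_ge0 => i _; exact: hh_ge0.
have e1 : \prod_i hh (a' i) (s' i) = hh (a j).+1 t * C.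
  rewrite (bigD1 j) //= s'j /a' eqxx addn1; congr (_ * _).
  by apply: eq_bigr => i hi; rewrite s'i // (negbTE hi) addn0.
have e2 : \prod_i hh (a i) (s' i) = hh (a j) t * C.
  rewrite (bigD1 j) //= s'j; congr (_ * _).
  by apply: eq_bigr => i hi; rewrite s'i.
have e3 : \prod_i hh (a i) (s i) = hh (a j) t.+1 * C by rewrite (bigD1 j) //= sjE.
rewrite e1 in IH1; rewrite e2 in IH2; rewrite e3.
have mlam : m%:R / n%:R <= lam by rewrite /lam ler_wpM2r // ?invr_ge0 ?ler0n // ler_nat.
have h2t : (2 : R) ^+ t <= g.
  apply: le_trans gK; apply: ler_weXn2l; first by rewrite ler1n.
  have : (s j <= \sum_i s i)%N by rewrite (bigD1 j) //= leq_addr.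
  rewrite hs sjE => h; apply: ltnW; exact: leq_trans h hk.
have step := hh_step (a j) t h2t.
apply: le_trans (_ : lam * (hh (a j).+1 t * C) + (a j)%:R * (hh (a j) t * C) <= _).
  apply: lerD; last by apply: ler_wpM2l.
  apply: le_trans (_ : m%:R / n%:R * (hh (a j).+1 t * C) <= _).
    by apply: ler_wpM2l => //; rewrite divr_ge0.
  by apply: ler_wpM2r => //; rewrite mulr_ge0 // hh_ge0.
by rewrite !mulrA -mulrDl; apply: ler_wpM2r.
Qed.

End Main.

Lemma two_pow_le (R : realType) (gamma : R) (m : nat) : 0 < gamma -> (0 < m)%N ->
  (2 : R) ^+ kmax gamma m <= (m%:R : R) `^ gamma.
Proof.
move=> hg hm.
have m1 : (1 : R) <= m%:R by rewrite ler1n.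
have m0 : (m%:R : R) != 0 by rewrite pnatr_eq0 -lt0n.
have l0 : 0 <= gamma * ln (m%:R : R) by apply: mulr_ge0; [exact: ltW | exact: ln_ge0].
have hK : ((kmax gamma m)%:R : R) <= gamma * ln (m%:R : R).
  rewrite /kmax natr_absz ger0_norm ?floor_ge0 //; exact: floor_le.
apply: le_trans (_ : expR 1 ^+ kmax gamma m <= _).
  apply: lerXn2r; rewrite ?nnegrE ?expR_ge0 //; have := expR_ge1Dx (1 : R); lra.
rewrite -expRM_natl mulr1 /powR (negbTE m0) ler_expR //.
Qed.

Theorem lemma4p4 (R : realType) (gamma : R) :
  0 < gamma ->
  exists c : R, 0 < c /\
    forall (m n : nat), (0 < m)%N -> (0 < n)%N ->
    forall s : 'I_n -> nat,
      (\sum_j s j <= kmax gamma m)%N ->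
      (n%:R / m%:R) ^+ #|[pred j | (0 < s j)%N]| * @multinom_moment R m n s
      <= (1 + c * ((m%:R : R) `^ (1 + gamma)) / n%:R) ^+ kmax gamma m.
Proof.
move=> hg; exists 1; split; first exact: ltr01.
move=> m n hm hn s hs.
set K := kmax gamma m.
set g : R := (2 : R) ^+ K.
have g0 : 0 <= g by rewrite exprn_ge0.
have m0 : (m%:R : R) != 0 by rewrite pnatr_eq0 -lt0n.
have n0 : (n%:R : R) != 0 by rewrite pnatr_eq0 -lt0n.
have mom : @multinom_moment R m n s = Q R n m m (PP R n (fun _ => 0%N) s).
  rewrite /multinom_moment /Q [in RHS]big_mkcond; apply: eq_bigr => w _.
  rewrite /multinom_pmf /wsum /coef /PP; case: ifP => _; last by rewrite mul0r.
  by congr (_ * _); apply: eq_bigr => i _; rewrite addn0.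
have H := @main R n m g K hn g0 (lexx _) _ s (fun _ => 0%N) m (leqnn m) erefl hs.
set x : R := 1 + m%:R / n%:R * g.
have x1 : 1 <= x by rewrite /x lerDl mulr_ge0 // divr_ge0.
have x0 : 0 <= x by apply: le_trans x1.
have p0 : 0 <= (n%:R / m%:R : R) ^+ #|[pred j | (0 < s j)%N]|.
  by rewrite exprn_ge0 // divr_ge0.
rewrite mom; apply: le_trans (ler_wpM2l p0 H) _.
apply: le_trans (_ : x ^+ K <= _); last first.
  apply: lerXn2r; rewrite ?nnegrE //.
  rewrite /x lerD2l mul1r powRD; last by rewrite m0 implybT.
  rewrite powRr1 ?ler0n // mulrAC ler_wpM2r ?invr_ge0 ?ler0n // ler_wpM2l ?ler0n //.
  exact: two_pow_le.
apply: le_trans (_ : x ^+ (\sum_j s j) <= _); last by apply: ler_weXn2l.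
rewrite -prodr_const big_mkcond /= -big_split /= -prodrXr.
apply: ler_prod => i _; apply/andP; split.
  rewrite mulr_ge0 //; last by apply: hh_ge0.
  by case: ifP => // _; rewrite divr_ge0.
rewrite /hh /= inE.
case: (s i) => [|t] /=; first by rewrite mul1r expr0.
rewrite -/x.
have -> : n%:R / m%:R * (m%:R / n%:R * x ^+ t) = x ^+ t.
  by field; rewrite m0 n0.
rewrite exprS; rewrite -[X in X <= _]mul1r ler_wpM2r // exprn_ge0 //.
Qed.
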